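(* Let $G$ be a TDLC-group of type $\mathrm{FP}_{n+1}$, and let $(\mathbb{Q}[\Omega_i],\partial_i)$ and $(\mathbb{Q}[\Lambda_i],\delta_i)$ be two partial proper permutation resolutions of $\mathbb{Q}$ of finite type in degrees $0,\dots,n+1$. Then $G$ satisfies the weak $n$-dimensional linear isoperimetric inequality with respect to $(\mathbb{Q}[\Lambda_i],\delta_i)$ if and only if it does with respect to $(\mathbb{Q}[\Omega_i],\partial_i)$.
   Context: A TDLC-group is a totally disconnected locally compact Hausdorff topological group. A discrete $\mathbb{Q}[G]$-module is a left $\mathbb{Q}[G]$-module in which every element has open stabilizer. A $G$-set $\Omega$ is proper if all point stabilizers are compact open; $\mathbb{Q}[\Omega]$ is then a proper permutation module (projective among discrete modules), finitely generated iff $\Omega/G$ is finite, with $\ell_1$-norm $\|\sum a_\omega\omega\|_1=\sum|a_\omega|$. A partial proper permutation resolution of finite type in degrees $0,\dots,n+1$ is an exact sequence $\mathbb{Q}[\Omega_{n+1}]\xrightarrow{\partial_{n+1}}\mathbb{Q}[\Omega_n]\xrightarrow{\partial_n}\cdots\to\mathbb{Q}[\Omega_0]\to\mathbb{Q}\to0$ of discrete modules with each $\Omega_i$ a proper $G$-set with finitely many orbits; $G$ has type $\mathrm{FP}_{n+1}$ if one exists. $G$ satisfies the weak $n$-dimensional linear isoperimetric inequality with respect to such a resolution if there is $C>0$ with $\inf\{\|y\|_1: y\in\mathbb{Q}[\Omega_{n+1}],\ \partial_{n+1}(y)=x\}\le C\|x\|_1$ for all $x\in\ker\partial_n$. *)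

(* Defs.v *)
From HB Require Import structures.
From mathcomp Require Import all_boot all_order all_algebra.
From Stdlib Require Import List.
Set Implicit Arguments. Unset Strict Implicit. Unset Printing Implicit Defensive.
Import Order.TTheory GRing.Theory Num.Theory.
Local Open Scope ring_scope.

Definition is_topology (T : Type) (open : (T -> Prop) -> Prop) : Prop :=
  open (fun _ => True) /\ open (fun _ => False) /\
  (forall U V, open U -> open V -> open (fun x => U x /\ V x)) /\
  (forall (I : Type) (F : I -> T -> Prop),
      (forall i, open (F i)) -> open (fun x => exists i, F i x)).

Definition compact (T : Type) (open : (T -> Prop) -> Prop) (K : T -> Prop) : Prop :=
  forall (I : Type) (F : I -> T -> Prop),
    (forall i, open (F i)) -> (forall x, K x -> exists i, F i x) ->
    exists l : list I, forall x, K x -> exists i, List.In i l /\ F i x.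

Definition hausdorff (T : Type) (open : (T -> Prop) -> Prop) : Prop :=
  forall x y : T, x <> y -> exists U V, open U /\ open V /\ U x /\ V y /\
    (forall z, U z -> V z -> False).

Definition locally_compact (T : Type) (open : (T -> Prop) -> Prop) : Prop :=
  forall x : T, exists U K, open U /\ U x /\ (forall y, U y -> K y) /\ compact open K.

Definition connected (T : Type) (open : (T -> Prop) -> Prop) (S : T -> Prop) : Prop :=
  forall U V, open U -> open V -> (forall x, S x -> U x \/ V x) ->
    (forall x, S x -> U x -> V x -> False) ->
    (forall x, S x -> U x) \/ (forall x, S x -> V x).

Definition totally_disconnected (T : Type) (open : (T -> Prop) -> Prop) : Prop :=
  forall S, connected open S -> forall x y, S x -> S y -> x = y.

Record tdlc_group := TDLCGroup {
  gcar :> Type;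
  gmul : gcar -> gcar -> gcar;
  ginv : gcar -> gcar;
  gone : gcar;
  gopen : (gcar -> Prop) -> Prop;
  gmulA : forall x y z, gmul x (gmul y z) = gmul (gmul x y) z;
  gmul1 : forall x, gmul gone x = x;
  gmulV : forall x, gmul (ginv x) x = gone;
  gtop : is_topology gopen;
  (* multiplication G x G -> G continuous for the product topology *)
  gmul_cont : forall W, gopen W -> forall x y, W (gmul x y) ->
      exists U V, gopen U /\ gopen V /\ U x /\ V y /\
        (forall a b, U a -> V b -> W (gmul a b));
  ginv_cont : forall W, gopen W -> gopen (fun x => W (ginv x));
  ghausdorff : hausdorff gopen;
  glocally_compact : locally_compact gopen;
  gtot_disc : totally_disconnected gopen
}.

Section Modules.
Variable G : tdlc_group.

Definition is_action (Om : Type) (act : G -> Om -> Om) : Prop :=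
  (forall w, act (@gone G) w = w) /\
  (forall g h w, act (@gmul G g h) w = act g (act h w)).

Definition stab (Om : Type) (act : G -> Om -> Om) (w : Om) : G -> Prop :=
  fun g => act g w = w.

Definition proper_gset_fin (Om : Type) (act : G -> Om -> Om) : Prop :=
  is_action act /\
  (forall w, gopen (stab act w) /\ compact (@gopen G) (stab act w)) /\
  (exists reps : list Om, forall w, exists v, List.In v reps /\ exists g, act g v = w).

(* Q[Om] : finitely supported functions Om -> rat *)
Definition finsupp (Om : Type) (f : Om -> rat) : Prop :=
  exists s : list Om, forall w, f w != 0 -> List.In w s.

Definition is_l1 (Om : Type) (f : Om -> rat) (r : rat) : Prop :=
  exists s : list Om, List.NoDup s /\ (forall w, f w != 0 -> List.In w s) /\
    r = \sum_(w <- s) `|f w|.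

Definition fadd (Om : Type) (f1 f2 : Om -> rat) : Om -> rat := fun w => f1 w + f2 w.
Definition fscale (Om : Type) (c : rat) (f : Om -> rat) : Om -> rat := fun w => c * f w.
Definition gact (Om : Type) (act : G -> Om -> Om) (g : G) (f : Om -> rat) : Om -> rat :=
  fun w => f (act (@ginv G g) w).

Definition is_morph (A B : Type) (actA : G -> A -> A) (actB : G -> B -> B)
    (d : (A -> rat) -> (B -> rat)) : Prop :=
  (forall f, finsupp f -> finsupp (d f)) /\
  (forall f1 f2, finsupp f1 -> finsupp f2 -> d (fadd f1 f2) =1 fadd (d f1) (d f2)) /\
  (forall c f, finsupp f -> d (fscale c f) =1 fscale c (d f)) /\
  (forall g f, finsupp f -> d (gact actA g f) =1 gact actB g (d f)).

Definition is_aug (A : Type) (actA : G -> A -> A) (eps : (A -> rat) -> rat) : Prop :=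
  (forall f1 f2, finsupp f1 -> finsupp f2 -> eps (fadd f1 f2) = eps f1 + eps f2) /\
  (forall c f, finsupp f -> eps (fscale c f) = c * eps f) /\
  (forall g f, finsupp f -> eps (gact actA g f) = eps f).

(* Partial proper permutation resolution of finite type in degrees 0..n+1:
   Q[Om (n+1)] --d n--> Q[Om n] --> ... --d 0--> Q[Om 0] --eps--> Q --> 0,
   where d i : Q[Om (i+1)] -> Q[Om i]. *)
Definition ppres (n : nat) (Om : nat -> Type) (act : forall i, G -> Om i -> Om i)
    (d : forall i, (Om i.+1 -> rat) -> (Om i -> rat)) (eps : (Om 0%N -> rat) -> rat) : Prop :=
  (forall i, (i <= n.+1)%N -> proper_gset_fin (act i)) /\
  (forall i, (i <= n)%N -> is_morph (act i.+1) (act i) (d i)) /\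
  is_aug (act 0%N) eps /\
  (forall q : rat, exists x, finsupp x /\ eps x = q) /\
  (forall x, finsupp x -> eps x = 0 <-> exists y, finsupp y /\ d 0%N y =1 x) /\
  (* exactness at Q[Om (i+1)], for i+1 <= n *)
  (forall i, (i < n)%N -> forall x, finsupp x ->
     ((forall w, d i x w = 0) <-> exists y, finsupp y /\ d i.+1 y =1 x)).

Definition type_FP (m : nat) : Prop :=
  match m with
  | 0%N => True (* not used *)
  | n.+1 => exists (Om : nat -> Type) (act : forall i, G -> Om i -> Om i)
              (d : forall i, (Om i.+1 -> rat) -> (Om i -> rat)) (eps : (Om 0%N -> rat) -> rat),
              ppres n act d eps
  end.

Definition ker_at (Om : nat -> Type)
    (d : forall i, (Om i.+1 -> rat) -> (Om i -> rat)) (eps : (Om 0%N -> rat) -> rat)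
    (n : nat) : (Om n -> rat) -> Prop :=
  match n return (Om n -> rat) -> Prop with
  | 0%N => fun x => eps x = 0
  | k.+1 => fun x => forall w, d k x w = 0
  end.

(* The infimum inequality is spelled out: for every e > 0 some preimage y has
   |y|_1 <= C |x|_1 + e. *)
Definition weak_iso (n : nat) (Om : nat -> Type)
    (d : forall i, (Om i.+1 -> rat) -> (Om i -> rat)) (eps : (Om 0%N -> rat) -> rat) : Prop :=
  exists C : rat, 0 < C /\
    forall x : Om n -> rat, finsupp x -> ker_at d eps x ->
    forall rx, is_l1 x rx -> forall e : rat, 0 < e ->
      exists y : Om n.+1 -> rat, finsupp y /\ d n y =1 x /\
        exists ry, is_l1 y ry /\ ry <= C * rx + e.

End Modules.

(* Main.v *)
Require Import Defs.
From HB Require Import structures.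
From mathcomp Require Import all_boot all_order all_algebra ring lra.
From Stdlib Require Import List Permutation ClassicalEpsilon FunctionalExtensionality PropExtensionality FinFun.
Set Implicit Arguments. Unset Strict Implicit. Unset Printing Implicit Defensive.
Import Order.TTheory GRing.Theory Num.Theory.
Local Open Scope ring_scope.


Section Lists.
Variable A : Type.
Implicit Types (l t : list A) (F : A -> rat).

Lemma sum_perm F l l' : Permutation l l' ->
  \sum_(w <- l) F w = \sum_(w <- l') F w.
Proof.
elim=> //= [x a b _ IH|x y a|a b c _ IH1 _ IH2].
- by rewrite !big_cons IH.
- by rewrite !big_cons addrCA.
- by rewrite IH1 IH2.
Qed.

Lemma sum_map (B : Type) (f : B -> A) F (l : list B) :
  \sum_(w <- List.map f l) F w = \sum_(w <- l) F (f w).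
Proof. by elim: l => [|a l IH] /=; rewrite ?big_nil // !big_cons IH. Qed.

Lemma sum_filter0 (p : A -> bool) F l : (forall w, ~~ p w -> F w = 0) ->
  \sum_(w <- List.filter p l) F w = \sum_(w <- l) F w.
Proof.
move=> H; elim: l => [|a l IH] /=; first by rewrite big_nil.
case E: (p a); rewrite !big_cons IH //.
by rewrite H ?E // add0r.
Qed.

Lemma sum_ge0 F l : (forall w, 0 <= F w) -> 0 <= \sum_(w <- l) F w.
Proof. by move=> H; elim: l => [|a l IH]; rewrite ?big_nil // big_cons addr_ge0. Qed.

Lemma sum_incl F l l' : (forall w, 0 <= F w) -> NoDup l -> NoDup l' ->
  incl l l' -> \sum_(w <- l) F w <= \sum_(w <- l') F w.
Proof.
move=> H0 ndl; elim: ndl l' => [|a l0 nal ndl0 IH] l' ndl' inc.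
  by rewrite big_nil; apply: sum_ge0.
have [l1 [l2 El']] := in_split a l' (inc a (or_introl erefl)).
subst l'.
have P : Permutation (l1 ++ a :: l2) (a :: l1 ++ l2).
  by apply: Permutation_sym; apply: Permutation_middle.
rewrite (sum_perm F P) !big_cons lerD2l.
apply: IH; first by apply: NoDup_remove_1 ndl'.
move=> w wl; have : In w (l1 ++ a :: l2) by apply: inc; right.
rewrite !in_app_iff /= => -[|[E|]]; [by left| |by right].
by subst w.
Qed.

Lemma sum_indep (x : A -> rat) F t1 t2 : NoDup t1 -> NoDup t2 ->
  (forall w, x w != 0 -> In w t1) -> (forall w, x w != 0 -> In w t2) ->
  (forall w, x w = 0 -> F w = 0) ->
  \sum_(w <- t1) F w = \sum_(w <- t2) F w.
Proof.
move=> n1 n2 c1 c2 HF.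
have H : forall w, ~~ (x w != 0) -> F w = 0 by move=> w; rewrite negbK => /eqP; apply: HF.
rewrite -(sum_filter0 t1 H) -(sum_filter0 t2 H).
apply: sum_perm; apply: NoDup_Permutation; try by apply: NoDup_filter.
by move=> w; rewrite !filter_In; split=> -[_ h]; split=> //; [apply: c2|apply: c1].
Qed.

Lemma sum_le_cover F u c : (forall w, 0 <= F w) -> NoDup u -> NoDup c ->
  (forall w, F w != 0 -> In w c) -> \sum_(w <- u) F w <= \sum_(w <- c) F w.
Proof.
move=> H0 nu nc cov.
have H : forall w, ~~ (F w != 0) -> F w = 0 by move=> w; rewrite negbK => /eqP.
rewrite -(sum_filter0 u H); apply: sum_incl => //; first by apply: NoDup_filter.
by move=> w; rewrite filter_In => -[_]; apply: cov.
Qed.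

End Lists.


Section Grp.
Variable G : tdlc_group.
Local Notation "x * y" := (@gmul G x y).

Lemma gmulV' (g : G) : g * ginv g = @gone G.
Proof.
rewrite -[LHS](gmul1 (g * ginv g)) -{1}(gmulV (ginv g)) -gmulA.
by rewrite (gmulA (ginv g) g) gmulV gmul1 gmulV.
Qed.

Lemma gmul1' (g : G) : g * @gone G = g.
Proof. by rewrite -(gmulV g) gmulA gmulV' gmul1. Qed.

Lemma ginv_uniq (a x : G) : a * x = @gone G -> a = ginv x.
Proof. by move=> H; rewrite -[a]gmul1' -(gmulV' x) gmulA H gmul1. Qed.

Lemma ginvM (g h : G) : ginv (g * h) = ginv h * ginv g.
Proof.
symmetry; apply: ginv_uniq.
by rewrite -gmulA (gmulA (ginv g)) gmulV gmul1 gmulV.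
Qed.

Lemma ginv1 : ginv (@gone G) = @gone G.
Proof. by symmetry; apply: ginv_uniq; rewrite gmul1. Qed.

Lemma ginvK (g : G) : ginv (ginv g) = g.
Proof. by symmetry; apply: ginv_uniq; apply: gmulV'. Qed.

Section Act.
Variable Om : Type.
Variable act : G -> Om -> Om.
Hypothesis hact : is_action act.

Lemma act1 w : act (@gone G) w = w. Proof. by case: hact. Qed.
Lemma actM g h w : act (g * h) w = act g (act h w). Proof. by case: hact. Qed.
Lemma actVK g w : act (ginv g) (act g w) = w.
Proof. by rewrite -actM gmulV act1. Qed.
Lemma actKV g w : act g (act (ginv g) w) = w.
Proof. by rewrite -actM gmulV' act1. Qed.
Lemma act_inj g : Injective (act g).
Proof. by move=> a b E; rewrite -(actVK g a) E actVK. Qed.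

Lemma gactM g h f : gact act (g * h) f = gact act g (gact act h f).
Proof. by apply: functional_extensionality => u; rewrite /gact ginvM actM. Qed.
Lemma gact1 f : gact act (@gone G) f = f.
Proof. by apply: functional_extensionality => u; rewrite /gact ginv1 act1. Qed.
Lemma gactVK g f : gact act (ginv g) (gact act g f) = f.
Proof. by rewrite -gactM gmulV gact1. Qed.
Lemma gactKV g f : gact act g (gact act (ginv g) f) = f.
Proof. by rewrite -gactM gmulV' gact1. Qed.
Lemma gact_inj g : Injective (gact act g).
Proof. by move=> a b E; rewrite -(gactVK g a) E gactVK. Qed.

Lemma finsupp_gact g f : finsupp f -> finsupp (gact act g f).
Proof.
move=> [s Hs]; exists (List.map (act g) s) => w Hw.
rewrite -(actKV g w); apply: in_map; exact: Hs.
Qed.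
End Act.
End Grp.

Definition dlt (A : Type) (w : A) : A -> rat :=
  fun u => if excluded_middle_informative (w = u) then 1 else 0.

Lemma gact_dlt (G : tdlc_group) Om (act : G -> Om -> Om) : is_action act ->
  forall g w, gact act g (dlt w) = dlt (act g w).
Proof.
move=> ha g w; apply: functional_extensionality => u; rewrite /gact /dlt.
case: excluded_middle_informative => E1; case: excluded_middle_informative => E2 //.
- by exfalso; apply: E2; rewrite E1 actKV.
- by exfalso; apply: E1; rewrite -E2 actVK.
Qed.

Definition lc (I B : Type) (t : list I) (c : I -> rat) (F : I -> B -> rat) : B -> rat :=
  fun u => \sum_(i <- t) c i * F i u.

Definition zf (B : Type) : B -> rat := fun _ => 0.

Section Fs.
Variable B : Type.
Implicit Types f : B -> rat.

Lemma finsupp0 : finsupp (@zf B).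
Proof. by exists nil => w; rewrite /zf eqxx. Qed.
Lemma finsupp_add f1 f2 : finsupp f1 -> finsupp f2 -> finsupp (fadd f1 f2).
Proof.
move=> [s1 H1] [s2 H2]; exists (s1 ++ s2) => w; rewrite /fadd in_app_iff => Hw.
case E1: (f1 w == 0); last by left; apply: H1; rewrite E1.
right; apply: H2; move/eqP: E1 Hw => ->; by rewrite add0r.
Qed.
Lemma finsupp_scale c f : finsupp f -> finsupp (fscale c f).
Proof.
move=> [s H]; exists s => w; rewrite /fscale mulf_eq0 negb_or => /andP[_]; exact: H.
Qed.
Lemma finsupp_dlt (w : B) : finsupp (dlt w).
Proof.
exists (w :: nil) => u; rewrite /dlt; case: excluded_middle_informative => E.
  by left. by rewrite eqxx.
Qed.
Lemma lc_cons I (a : I) t c (F : I -> B -> rat) : lc (a :: t) c F = fadd (fscale (c a) (F a)) (lc t c F).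
Proof. by apply: functional_extensionality => u; rewrite /lc /fadd /fscale big_cons. Qed.
Lemma lc_nil I c (F : I -> B -> rat) : lc (@nil I) c F = @zf B.
Proof. by apply: functional_extensionality => u; rewrite /lc big_nil. Qed.
Lemma finsupp_lc I (t : list I) c (F : I -> B -> rat) : (forall i, In i t -> finsupp (F i)) -> finsupp (lc t c F).
Proof.
elim: t => [|a t IH] H; first by rewrite lc_nil; apply: finsupp0.
rewrite lc_cons; apply: finsupp_add; first by apply: finsupp_scale; apply: H; left.
by apply: IH => i hi; apply: H; right.
Qed.

Lemma lc_dlt_notin (x : B -> rat) t u : ~ In u t -> lc t x (@dlt B) u = 0.
Proof.
elim: t => [|a t IH] /= Hu; first by rewrite /lc big_nil.
rewrite /lc big_cons {1}/dlt; case: excluded_middle_informative => E.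
  by exfalso; apply: Hu; left.
rewrite mulr0 add0r; apply: IH => h; apply: Hu; by right.
Qed.

Lemma lc_dlt_in (x : B -> rat) t u : NoDup t -> In u t -> lc t x (@dlt B) u = x u.
Proof.
elim=> [//|a t' na nd IH] /= Hu; rewrite /lc big_cons {1}/dlt.
case: (excluded_middle_informative (a = u)) => E.
- subst a; rewrite mulr1; have := lc_dlt_notin x na; rewrite /lc => ->; by rewrite addr0.
- rewrite mulr0 add0r; apply: IH; case: Hu => // h; by exfalso.
Qed.

Lemma lc_dlt (x : B -> rat) t : NoDup t -> (forall w, x w != 0 -> In w t) ->
  lc t x (@dlt B) = x.
Proof.
move=> nd cov; apply: functional_extensionality => u.
case: (excluded_middle_informative (In u t)) => H; first by apply: lc_dlt_in.
rewrite lc_dlt_notin //; case E: (x u == 0); first by move/eqP: E.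
by exfalso; apply: H; apply: cov; rewrite E.
Qed.
End Fs.


Section M.
Variable G : tdlc_group.
Variables (A B : Type) (actA : G -> A -> A) (actB : G -> B -> B).
Variable d : (A -> rat) -> (B -> rat).
Hypothesis hd : is_morph actA actB d.

Lemma mfs f : finsupp f -> finsupp (d f). Proof. by case: hd => H _; apply: H. Qed.
Lemma madd f1 f2 : finsupp f1 -> finsupp f2 -> d (fadd f1 f2) = fadd (d f1) (d f2).
Proof. by case: hd => _ [H _] h1 h2; apply: functional_extensionality; apply: H. Qed.
Lemma mscale c f : finsupp f -> d (fscale c f) = fscale c (d f).
Proof. by case: hd => _ [_ [H _]] h; apply: functional_extensionality; apply: H. Qed.
Lemma mgact g f : finsupp f -> d (gact actA g f) = gact actB g (d f).
Proof. by case: hd => _ [_ [_ H]] h; apply: functional_extensionality; apply: H. Qed.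
Lemma m0 : d (@zf A) = @zf B.
Proof.
have E : fscale 0 (@zf A) = @zf A.
  by apply: functional_extensionality => u; rewrite /fscale /zf mul0r.
rewrite -E mscale; last exact: finsupp0.
by apply: functional_extensionality => u; rewrite /fscale mul0r.
Qed.
Lemma mlc I (t : list I) c (F : I -> A -> rat) : (forall i, In i t -> finsupp (F i)) ->
  d (lc t c F) = lc t c (fun i => d (F i)).
Proof.
elim: t => [|a t IH] H; first by rewrite !lc_nil m0.
have Ha : finsupp (F a) by apply: H; left.
have Ht : forall i, In i t -> finsupp (F i) by move=> i hi; apply: H; right.
rewrite !lc_cons madd ?mscale ?IH //; [exact: finsupp_scale | exact: finsupp_lc].
Qed.
Lemma msub f1 f2 : finsupp f1 -> finsupp f2 ->
  d (fadd f1 (fscale (-1) f2)) = fadd (d f1) (fscale (-1) (d f2)).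
Proof. by move=> h1 h2; rewrite madd ?mscale //; apply: finsupp_scale. Qed.
End M.
Section Morph.
Variable G : tdlc_group.
Variables (A B C : Type) (actA : G -> A -> A) (actB : G -> B -> B) (actC : G -> C -> C).

Lemma is_morph_comp (d1 : (A -> rat) -> (B -> rat)) (d2 : (B -> rat) -> (C -> rat)) : is_morph actA actB d1 -> is_morph actB actC d2 ->
  is_morph actA actC (fun x => d2 (d1 x)).
Proof.
move=> h1 h2; split; [|split; [|split]].
- by move=> f hf; apply: (mfs h2); apply: (mfs h1).
- by move=> f1 f2 hf1 hf2; rewrite (madd h1) // (madd h2) //; apply: (mfs h1).
- by move=> c f hf; rewrite (mscale h1) // (mscale h2) //; apply: (mfs h1).
- by move=> g f hf; rewrite (mgact h1) // (mgact h2) //; apply: (mfs h1).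
Qed.

Lemma is_morph_id : is_morph actA actA (fun x => x).
Proof. by split; [|split; [|split]]. Qed.

Lemma is_morph_sub (d1 d2 : (A -> rat) -> (B -> rat)) : is_morph actA actB d1 -> is_morph actA actB d2 ->
  is_morph actA actB (fun x => fadd (d1 x) (fscale (-1) (d2 x))).
Proof.
move=> h1 h2; split; [|split; [|split]].
- by move=> f hf; apply: finsupp_add; [apply: (mfs h1)|apply: finsupp_scale; apply: (mfs h2)].
- move=> f1 f2 hf1 hf2 u; rewrite (madd h1) // (madd h2) // /fadd /fscale.
  by rewrite !mulrDr addrACA.
- move=> c f hf u; rewrite (mscale h1) // (mscale h2) // /fadd /fscale.
  by rewrite mulrDr mulrCA.
- by move=> g f hf u; rewrite (mgact h1) // (mgact h2).
Qed.
End Morph.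


Definition covers (A : Type) (t : list A) (x : A -> rat) := forall w, x w != 0 -> In w t.

Definition decT (A : Type) : forall x y : A, {x = y} + {x <> y} :=
  fun x y => excluded_middle_informative (x = y).

Lemma finsupp_nodup (A : Type) (x : A -> rat) : finsupp x -> exists t, NoDup t /\ covers t x.
Proof.
move=> [s H]; exists (nodup (@decT A) s); split; first exact: NoDup_nodup.
by move=> w /H; rewrite nodup_In.
Qed.

Lemma sum_in_le (A : Type) (F : A -> rat) l v : (forall w, 0 <= F w) -> In v l ->
  F v <= \sum_(w <- l) F w.
Proof.
move=> H0; elim: l => [//|a l IH] /= [E|Hv]; rewrite big_cons.
- by subst a; rewrite lerDl; apply: sum_ge0.
- by rewrite -[F v]add0r; apply: lerD => //; apply: IH.
Qed.

Lemma nrm_gact (G : tdlc_group) (A : Type) (act : G -> A -> A) : is_action act ->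
  forall g f u c, NoDup u -> NoDup c -> covers c f ->
  \sum_(w <- u) `|gact act g f w| <= \sum_(w <- c) `|f w|.
Proof.
move=> ha g f u c nu nc cov.
rewrite /gact -(sum_map (act (ginv g)) (fun w => `|f w|) u).
apply: sum_le_cover => //.
- by apply: Injective_map_NoDup => //; apply: act_inj.
- by move=> w; rewrite normr_eq0; apply: cov.
Qed.

Lemma morph_bound (G : tdlc_group) (A B : Type) (actA : G -> A -> A) (actB : G -> B -> B)
  (phi : (A -> rat) -> (B -> rat)) :
  proper_gset_fin actA -> is_action actB -> is_morph actA actB phi ->
  exists M, 0 <= M /\ forall x, finsupp x -> forall t, NoDup t -> covers t x ->
    forall u, NoDup u -> \sum_(w <- u) `|phi x w| <= M * \sum_(w <- t) `|x w|.
Proof.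
move=> [ha [_ [reps Hreps]]] hb hphi.
pose cf v := epsilon (inhabits nil) (fun c => NoDup c /\ covers c (phi (dlt v))).
have cfP v : NoDup (cf v) /\ covers (cf v) (phi (dlt v)).
  rewrite /cf; apply: (epsilon_spec (inhabits nil) (fun c => NoDup c /\ covers c (phi (dlt v)))).
  apply: finsupp_nodup; apply: (mfs hphi); apply: finsupp_dlt.
pose M : rat := \sum_(v <- reps) \sum_(w <- cf v) `|phi (dlt v) w|.
have M0 : 0 <= M by apply: sum_ge0 => v; apply: sum_ge0.
have C1 : forall w u, NoDup u -> \sum_(w' <- u) `|phi (dlt w) w'| <= M.
  move=> w u nu; have [v [inv [g Eg]]] := Hreps w.
  rewrite -Eg -(gact_dlt ha) (mgact hphi); last exact: finsupp_dlt.
  have H1 := nrm_gact hb g nu (proj1 (cfP v)) (proj2 (cfP v)).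
  apply: le_trans H1 _.
  rewrite /M; apply: (sum_in_le (F := fun v => \sum_(w <- cf v) `|phi (dlt v) w|)) => //.
  by move=> v'; apply: sum_ge0.
exists M; split=> // x fx t nt ct u nu.
rewrite -(lc_dlt nt ct) (mlc hphi); last by move=> i _; apply: finsupp_dlt.
rewrite (lc_dlt nt ct) /lc.
apply: (@le_trans _ _ (\sum_(w' <- u) \sum_(i <- t) `|x i| * `|phi (dlt i) w'|)).
  apply: ler_sum => w' _; apply: le_trans; first exact: ler_norm_sum.
  by apply: ler_sum => i _; rewrite normrM.
rewrite exchange_big /= mulr_sumr; apply: ler_sum => i _.
rewrite -mulr_sumr mulrC; apply: ler_wpM2r => //; exact: C1.
Qed.


Section Top.
Variable G : tdlc_group.

Lemma open_ext (P Q : G -> Prop) : gopen P -> (forall x, P x <-> Q x) -> gopen Q.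
Proof.
move=> hP H; have -> : Q = P; last done.
apply: functional_extensionality => x; apply: propositional_extensionality; split; apply H.
Qed.

Lemma open_ltrans (U : G -> Prop) (g : G) : gopen U -> gopen (fun x => U (gmul g x)).
Proof.
move=> hU; pose P := fun x => U (gmul g x).
pose I := {x : G | P x}.
pose Vf (i : I) := epsilon (inhabits (fun _ : G => True))
  (fun V => gopen V /\ V (proj1_sig i) /\ forall b, V b -> P b).
have VfP : forall i, gopen (Vf i) /\ Vf i (proj1_sig i) /\ forall b, Vf i b -> P b.
  move=> [x px]; rewrite /Vf; apply: (epsilon_spec (inhabits (fun _ : G => True))
    (fun V => gopen V /\ V x /\ forall b, V b -> P b)).
  have [U' [V' [_ [oV [Ug [Vx HUV]]]]]] := gmul_cont hU px.
  by exists V'; split=> //; split=> // b Vb; apply: HUV.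
have [_ [_ [_ Hu]]] := @gtop G.
apply: (open_ext (Hu I Vf (fun i => proj1 (VfP i)))) => x; split.
- by move=> [i hi]; apply: (proj2 (proj2 (VfP i))).
- by move=> px; exists (exist _ x px); apply: (proj1 (proj2 (VfP _))).
Qed.

Lemma open_fix (Om : Type) (act : G -> Om -> Om) : (forall w, gopen (stab act w)) ->
  forall L : list Om, gopen (fun x => forall w, In w L -> act x w = w).
Proof.
move=> hs; have [hT [_ [hI _]]] := @gtop G; elim=> [|a L IH].
  by apply: (open_ext hT) => x; split.
apply: (open_ext (hI _ _ (hs a) IH)) => x; split.
- by move=> [h1 h2] w /= [<-|]; [apply: h1|apply: h2].
- by move=> h; split; [apply: h; left | move=> w hw; apply: h; right].
Qed.
End Top.


Lemma fixL (G : tdlc_group) (B : Type) (act : G -> B -> B) : is_action act ->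
  forall (y : B -> rat) s, (forall w, y w != 0 -> In w s) ->
  forall x, (forall w, In w s -> act x w = w) -> gact act x y = y.
Proof.
move=> ha y s cov x hx; apply: functional_extensionality => u; rewrite /gact.
case: (excluded_middle_informative (In u s)) => hu.
  by rewrite -{1}(hx u hu) actVK.
have -> : y u = 0 by case E: (y u == 0); [apply/eqP | exfalso; apply: hu; apply: cov; rewrite E].
case E: (y (act (ginv x) u) == 0); first by apply/eqP.
exfalso; apply: hu; have h := cov _ (negbT E).
by rewrite -(actKV ha x u) (hx _ h).
Qed.

Lemma sum_cst (I : Type) (t : list I) (x : rat) : \sum_(i <- t) x = x *+ size t.
Proof. by elim: t => [|a t IH]; rewrite ?big_nil // big_cons IH mulrS. Qed.

Lemma eq_sum_in (I : Type) (t : list I) (F H : I -> rat) :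
  (forall i, In i t -> F i = H i) -> \sum_(i <- t) F i = \sum_(i <- t) H i.
Proof.
elim: t => [|a t IH] h; rewrite ?big_nil // !big_cons h; last by left.
by rewrite IH // => i hi; apply: h; right.
Qed.

Lemma avg (G : tdlc_group) (A B B' : Type) (actA : G -> A -> A) (actB : G -> B -> B)
  (actB' : G -> B' -> B') (phi : (A -> rat) -> (B -> rat)) (del : (B' -> rat) -> (B -> rat)) :
  is_action actA -> is_action actB' -> (forall w, gopen (stab actB' w)) ->
  is_morph actA actB phi -> is_morph actB' actB del ->
  forall a, compact (@gopen G) (stab actA a) ->
  forall y0, finsupp y0 -> del y0 = phi (dlt a) ->
  exists z, finsupp z /\ del z = phi (dlt a) /\
    forall k, stab actA a k -> gact actB' k z = z.
Proof.
move=> hA hB' hs hphi hdel a hc y0 fy0 dy0.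
pose K := stab actA a.
have K1 : K (@gone G) by rewrite /K /stab act1.
have KM : forall k1 k2, K k1 -> K k2 -> K (gmul k1 k2).
  by move=> k1 k2; rewrite /K /stab => h1 h2; rewrite actM // h2 h1.
have KV : forall k, K k -> K (ginv k).
  by move=> k; rewrite /K /stab => h; rewrite -{1}h actVK.
have [s cov] := fy0.
pose U0 := fun x => forall w, In w s -> actB' x w = w.
have oU0 : gopen U0 by apply: open_fix.
pose I := {g : G | K g}.
pose F := fun (i : I) x => U0 (gmul (ginv (proj1_sig i)) x).
have oF : forall i, gopen (F i) by move=> i; apply: open_ltrans.
have cF : forall x, K x -> exists i, F i x.
  move=> x kx; exists (exist _ x kx); rewrite /F /= gmulV => w _; exact: act1.
have [l Hl] := hc I F oF cF.
pose Vs := List.map (fun i : I => gact actB' (proj1_sig i) y0) l.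
pose Yl := nodup (@decT _) Vs.
have P1 : forall Y, In Y Yl -> exists k, K k /\ Y = gact actB' k y0.
  move=> Y; rewrite nodup_In in_map_iff => -[i [<- _]].
  by exists (proj1_sig i); split=> //; apply: proj2_sig.
have P2 : forall k, K k -> In (gact actB' k y0) Yl.
  move=> k kk; have [i [il Fi]] := Hl k kk.
  rewrite nodup_In in_map_iff; exists i; split=> //.
  have -> : k = gmul (proj1_sig i) (gmul (ginv (proj1_sig i)) k).
    by rewrite gmulA gmulV' gmul1.
  by rewrite gactM // (fixL hB' cov Fi).
have ndY : NoDup Yl by apply: NoDup_nodup.
have y0Y : In y0 Yl by rewrite -{1}(gact1 hB' y0); apply: P2.
have fY : forall Y, In Y Yl -> finsupp Y.
  by move=> Y /P1 [k [_ ->]]; apply: finsupp_gact.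
have dY : forall Y, In Y Yl -> del Y = phi (dlt a).
  move=> Y /P1 [k [kk ->]]; rewrite (mgact hdel) // dy0 -(mgact hphi); last exact: finsupp_dlt.
  by rewrite (gact_dlt hA) kk.
pose m := size Yl.
have m0 : (m%:R : rat) != 0.
  rewrite pnatr_eq0; case: (Yl) y0Y @m => //.
pose z := lc Yl (fun _ => (m%:R)^-1) (fun Y => Y).
exists z; split; [|split].
- by apply: finsupp_lc.
- rewrite /z (mlc hdel) //; apply: functional_extensionality => u.
  rewrite /lc (@eq_sum_in _ _ _ (fun _ => (m%:R)^-1 * phi (dlt a) u)); last first.
    by move=> Y hY; rewrite dY.
  by rewrite sum_cst -mulrnAl -mulr_natr -/m mulVf // mul1r.
- move=> k kk; apply: functional_extensionality => u.
  rewrite /gact /z /lc.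
  rewrite -(sum_map (gact actB' k) (fun Y => (m%:R)^-1 * Y u) Yl).
  apply: sum_perm; apply: NoDup_Permutation => //.
    by apply: Injective_map_NoDup => //; apply: gact_inj.
  move=> Y; split.
  + rewrite in_map_iff => -[Y0 [<- /P1 [k0 [kk0 ->]]]].
    by rewrite -gactM //; apply: P2; apply: KM.
  + move=> /P1 [k0 [kk0 ->]]; rewrite in_map_iff.
    exists (gact actB' (gmul (ginv k) k0) y0); split; last by apply: P2; apply: KM => //; apply: KV.
    by rewrite -gactM // gmulA gmulV' gmul1.
Qed.


Fixpoint pfirst (A : Type) (l : list A) (P : A -> Prop) (d : A) : A :=
  match l with
  | nil => d
  | a :: l => if excluded_middle_informative (P a) then a else pfirst l P d
  end.

Lemma pfirst_spec (A : Type) (l : list A) (P : A -> Prop) d :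
  (exists v, In v l /\ P v) -> P (pfirst l P d).
Proof.
elim: l => [|a l IH] /= [v [hv pv]]; first by [].
case: excluded_middle_informative => // h; apply: IH; exists v; split=> //.
by case: hv => // e; subst.
Qed.

Lemma pfirst_ext (A : Type) (l : list A) (P Q : A -> Prop) d :
  (forall v, P v <-> Q v) -> pfirst l P d = pfirst l Q d.
Proof.
move=> h; elim: l => [|a l IH] //=.
case: excluded_middle_informative => hP; case: excluded_middle_informative => hQ //.
- by exfalso; apply: hQ; apply/h.
- by exfalso; apply: hP; apply/h.
Qed.

Lemma pfirst_ext2 (A : Type) (l : list A) (P Q : A -> Prop) d d' :
  (exists v, In v l /\ P v) -> (forall v, P v <-> Q v) -> pfirst l P d = pfirst l Q d'.
Proof.
move=> ex h; elim: l ex => [|a l IH] /= [v [hv pv]]; first by [].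
case: excluded_middle_informative => hP; case: excluded_middle_informative => hQ //.
- by exfalso; apply: hQ; apply/h.
- by exfalso; apply: hP; apply/h.
- apply: IH; exists v; split=> //; by case: hv => // e; subst.
Qed.

Lemma covers_nodup_app (A : Type) (t1 t2 : list A) (x : A -> rat) :
  (covers t1 x \/ covers t2 x) -> covers (nodup (@decT A) (t1 ++ t2)) x.
Proof.
move=> [h|h] w hw; rewrite nodup_In in_app_iff; [left|right]; exact: h.
Qed.

Lemma plift (G : tdlc_group) (A B B' : Type) (actA : G -> A -> A) (actB : G -> B -> B)
  (actB' : G -> B' -> B') (phi : (A -> rat) -> (B -> rat)) (del : (B' -> rat) -> (B -> rat)) :
  proper_gset_fin actA -> is_action actB' -> (forall w, gopen (stab actB' w)) ->
  is_morph actA actB phi -> is_morph actB' actB del ->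
  (forall x, finsupp x -> exists y, finsupp y /\ del y = phi x) ->
  exists psi, is_morph actA actB' psi /\ forall x, finsupp x -> del (psi x) = phi x.
Proof.
move=> [hA [hstab [reps Hreps]]] hB' hs hphi hdel himg.
have zP : forall a, exists z, finsupp z /\ del z = phi (dlt a) /\
    forall k, stab actA a k -> gact actB' k z = z.
  move=> a; have [y0 [fy0 dy0]] := himg _ (finsupp_dlt a).
  exact: (avg hA hB' hs hphi hdel (proj2 (hstab a)) fy0 dy0).
pose zz a := epsilon (inhabits (@zf B')) (fun z => finsupp z /\ del z = phi (dlt a) /\
    forall k, stab actA a k -> gact actB' k z = z).
have zzP : forall a, finsupp (zz a) /\ del (zz a) = phi (dlt a) /\
    forall k, stab actA a k -> gact actB' k (zz a) = zz a.
  move=> a; apply: (epsilon_spec (inhabits (@zf B')) (fun z => finsupp z /\ del z = phi (dlt a) /\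
    forall k, stab actA a k -> gact actB' k z = z)); apply: zP.
pose orb v w := exists g, actA g v = w.
pose rep w := pfirst reps (fun v => orb v w) w.
have repP : forall w, orb (rep w) w.
  move=> w; rewrite /rep; apply: (@pfirst_spec _ reps (fun v => orb v w)); have [v [hv [g hg]]] := Hreps w.
  by exists v; split=> //; exists g.
have repE : forall k w, rep (actA k w) = rep w.
  move=> k w; rewrite /rep; apply: (@pfirst_ext2 _ reps (fun v => orb v (actA k w)) (fun v => orb v w)).
    have [v [hv [g hg]]] := Hreps w; exists v; split=> //; exists (gmul k g); by rewrite actM // hg.
  move=> v; split.
  - move=> [g hg]; exists (gmul (ginv k) g); by rewrite actM // hg actVK.
  - move=> [g hg]; exists (gmul k g); by rewrite actM // hg.
pose gw w := epsilon (inhabits (@gone G)) (fun g => actA g (rep w) = w).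
have gwP : forall w, actA (gw w) (rep w) = w.
  move=> w; apply: (epsilon_spec (inhabits (@gone G)) (fun g => actA g (rep w) = w)); apply: repP.
pose psiw w := gact actB' (gw w) (zz (rep w)).
have psiwE : forall k w, psiw (actA k w) = gact actB' k (psiw w).
  move=> k w; rewrite /psiw repE -gactM //.
  have E2 : actA (gw (actA k w)) (rep w) = actA k (actA (gw w) (rep w)).
    by have := gwP (actA k w); rewrite repE => ->; rewrite gwP.
  move: E2; set v := rep w; set g1 := gw w; set g2 := gw (actA k w) => E2.
  pose s := gmul (ginv (gmul k g1)) g2.
  have ss : stab actA v s by rewrite /stab /s actM // E2 -(actM hA k g1) actVK.
  have -> : g2 = gmul (gmul k g1) s by rewrite /s gmulA gmulV' gmul1.
  by rewrite gactM // (proj2 (proj2 (zzP v)) s ss).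
have psiwF : forall w, finsupp (psiw w).
  by move=> w; apply: finsupp_gact => //; apply: (proj1 (zzP _)).
have psiwD : forall w, del (psiw w) = phi (dlt w).
  move=> w; rewrite /psiw (mgact hdel); last exact: (proj1 (zzP _)).
  rewrite (proj1 (proj2 (zzP _))) -(mgact hphi); last exact: finsupp_dlt.
  by rewrite (gact_dlt hA) gwP.
pose T (x : A -> rat) := epsilon (inhabits (@nil A)) (fun t => NoDup t /\ covers t x).
have TP : forall x, finsupp x -> NoDup (T x) /\ covers (T x) x.
  move=> x fx; apply: (epsilon_spec (inhabits (@nil A)) (fun t => NoDup t /\ covers t x)); exact: finsupp_nodup.
pose psi x := lc (T x) x psiw.
have key : forall x t, finsupp x -> NoDup t -> covers t x -> psi x = lc t x psiw.
  move=> x t fx nt ct; apply: functional_extensionality => u; rewrite /psi /lc.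
  have [n1 c1] := TP x fx.
  apply: (sum_indep (x := x)) => // w ->; exact: mul0r.
exists psi; split; last first.
  move=> x fx; have [n1 c1] := TP x fx.
  rewrite /psi (mlc hdel); last by move=> i _; apply: psiwF.
  have -> : (fun i => del (psiw i)) = (fun i => phi (dlt i)).
    by apply: functional_extensionality => i; apply: psiwD.
  rewrite -(mlc hphi); last by move=> i _; apply: finsupp_dlt.
  by rewrite lc_dlt.
split; [|split; [|split]].
- by move=> f ff; apply: finsupp_lc => i _; apply: psiwF.
- move=> f1 f2 ff1 ff2 u.
  have [n1 c1] := TP f1 ff1; have [n2 c2] := TP f2 ff2.
  set t := nodup (@decT A) (T f1 ++ T f2).
  have nt : NoDup t by apply: NoDup_nodup.
  have ft : finsupp (fadd f1 f2) by apply: finsupp_add.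
  rewrite (key _ t ft nt); last first.
    move=> w; rewrite /fadd => hw; rewrite /t nodup_In in_app_iff.
    case E: (f1 w == 0); [right|left]; last by apply: c1; rewrite E.
    by apply: c2; move/eqP: E hw => ->; rewrite add0r.
  rewrite (key _ t ff1 nt); last by apply: covers_nodup_app; left.
  rewrite (key _ t ff2 nt); last by apply: covers_nodup_app; right.
  by rewrite /lc /fadd -big_split /=; apply: eq_bigr => w _; rewrite mulrDl.
- move=> c f ff u; have [n1 c1] := TP f ff.
  rewrite (key _ (T f) (finsupp_scale c ff) n1); last first.
    by move=> w; rewrite /fscale mulf_eq0 negb_or => /andP[_]; apply: c1.
  by rewrite /lc /fscale mulr_sumr; apply: eq_bigr => w _; rewrite mulrA.
- move=> g f ff u; have [n1 c1] := TP f ff.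
  rewrite (key _ (List.map (actA g) (T f)) (finsupp_gact hA g ff)); last first.
  + move=> w; rewrite /gact => hw; rewrite -(actKV hA g w); apply: in_map; exact: c1.
  + by apply: Injective_map_NoDup => //; apply: act_inj.
  rewrite /lc sum_map /gact; apply: eq_bigr => w _; rewrite actVK // psiwE.
  by rewrite /gact.
Qed.


Definition tact (G : tdlc_group) : G -> unit -> unit := fun _ u => u.
Definition epsu (A : Type) (eps : (A -> rat) -> rat) : (A -> rat) -> (unit -> rat) :=
  fun x _ => eps x.

Lemma finsupp_unit (f : unit -> rat) : finsupp f.
Proof. by exists (tt :: nil) => -[] _; left. Qed.

Lemma aug_morph (G : tdlc_group) (A : Type) (act : G -> A -> A) eps :
  is_aug act eps -> is_morph act (@tact G) (epsu eps).
Proof.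
move=> [ha [hs hg]]; split; [|split; [|split]].
- by move=> f _; apply: finsupp_unit.
- by move=> f1 f2 h1 h2 u; rewrite /epsu ha.
- by move=> c f h u; rewrite /epsu hs.
- by move=> g f h u; rewrite /epsu hg.
Qed.

Section R.
Variable G : tdlc_group.
Variable n : nat.
Variable Om : nat -> Type.
Variable act : forall i, G -> Om i -> Om i.
Variable d : forall i, (Om i.+1 -> rat) -> (Om i -> rat).
Variable eps : (Om 0%N -> rat) -> rat.
Arguments act : clear implicits. Arguments d : clear implicits.
Hypothesis hR : ppres n act d eps.

Lemma r_proper k : (k <= n.+1)%N -> proper_gset_fin (act k).
Proof. by case: hR => h _; apply: h. Qed.
Lemma r_action k : (k <= n.+1)%N -> is_action (act k).
Proof. by move=> hk; case: (r_proper hk). Qed.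
Lemma r_stab k : (k <= n.+1)%N -> forall w, gopen (stab (act k) w).
Proof. by move=> hk w; case: (r_proper hk) => _ [h _]; case: (h w). Qed.
Lemma r_morph k : (k <= n)%N -> is_morph (act k.+1) (act k) (d k).
Proof. by case: hR => _ [h _]; apply: h. Qed.
Lemma r_aug : is_aug (act 0%N) eps.
Proof. by case: hR => _ [_ [h _]]. Qed.
Lemma r_surj q : exists x, finsupp x /\ eps x = q.
Proof. by case: hR => _ [_ [_ [h _]]]. Qed.

Lemma ker_im k : (k <= n)%N -> forall x : Om k -> rat, finsupp x ->
  (ker_at d eps x <-> exists y, finsupp y /\ d k y = x).
Proof.
case: hR => _ [_ [_ [_ [h0 hi]]]].
case: k => [|j] hk x fx /=.
- rewrite h0 //; split=> -[y [fy e]]; exists y; split=> //.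
    exact: functional_extensionality.
  by rewrite e.
- rewrite hi //; split=> -[y [fy e]]; exists y; split=> //.
    exact: functional_extensionality.
  by rewrite e.
Qed.

Lemma bd_ker k : (k <= n)%N -> forall y, finsupp y -> ker_at d eps (d k y).
Proof.
move=> hk y fy; apply/(ker_im hk); first exact: (mfs (r_morph hk)).
by exists y.
Qed.

Lemma dd0 k : (k < n)%N -> forall y, finsupp y -> d k (d k.+1 y) = @zf _.
Proof.
move=> hk y fy; have := bd_ker hk fy => /= h.
by apply: functional_extensionality => w; rewrite h.
Qed.
End R.


Section Main.
Variable G : tdlc_group.
Variable n : nat.
Variables (Om : nat -> Type) (actO : forall i, G -> Om i -> Om i)
  (dO : forall i, (Om i.+1 -> rat) -> (Om i -> rat)) (epsO : (Om 0%N -> rat) -> rat).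
Variables (La : nat -> Type) (actL : forall i, G -> La i -> La i)
  (dL : forall i, (La i.+1 -> rat) -> (La i -> rat)) (epsL : (La 0%N -> rat) -> rat).
Arguments actO : clear implicits. Arguments dO : clear implicits.
Arguments actL : clear implicits. Arguments dL : clear implicits.
Hypothesis hO : ppres n actO dO epsO.
Hypothesis hL : ppres n actL dL epsL.

Definition Tk k := exists (F : (Om k -> rat) -> (La k -> rat)) (Gm : (La k -> rat) -> (Om k -> rat))
  (E : (Om k -> rat) -> (Om k -> rat)),
  is_morph (actO k) (actL k) F /\ is_morph (actL k) (actO k) Gm /\ is_morph (actO k) (actO k) E /\
  (forall y, finsupp y -> ker_at dL epsL (F (dO k y))) /\
  (forall y, finsupp y -> ker_at dO epsO (Gm (dL k y))) /\
  (forall x, finsupp x -> ker_at dO epsO (E x)) /\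
  (forall x, finsupp x -> ker_at dO epsO x -> E x = fadd x (fscale (-1) (Gm (F x)))).

Lemma aug_add (A : Type) (act : G -> A -> A) eps f1 f2 : is_aug act eps -> finsupp f1 -> finsupp f2 ->
  eps (fadd f1 f2) = eps f1 + eps f2.
Proof. by move=> [h _]; apply: h. Qed.
Lemma aug_scale (A : Type) (act : G -> A -> A) eps c f : is_aug act eps -> finsupp f ->
  eps (fscale c f) = c * eps f.
Proof. by move=> [_ [h _]]; apply: h. Qed.

Lemma T0 : Tk 0.
Proof.
have l0 : (0 <= n.+1)%N by [].
have [F [mF hF]] := plift (r_proper hO l0) (r_action hL l0) (r_stab hL l0)
  (aug_morph (r_aug hO)) (aug_morph (r_aug hL)) (fun x _ =>
    let: ex_intro y (conj fy e) := r_surj hL (epsO x) in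
    ex_intro _ y (conj fy (functional_extensionality _ _ (fun _ => e)))).
have [Gm [mG hG]] := plift (r_proper hL l0) (r_action hO l0) (r_stab hO l0)
  (aug_morph (r_aug hL)) (aug_morph (r_aug hO)) (fun x _ =>
    let: ex_intro y (conj fy e) := r_surj hO (epsL x) in
    ex_intro _ y (conj fy (functional_extensionality _ _ (fun _ => e)))).
have hF' : forall x, finsupp x -> epsL (F x) = epsO x.
  by move=> x fx; have := hF x fx => /(congr1 (fun h => h tt)).
have hG' : forall x, finsupp x -> epsO (Gm x) = epsL x.
  by move=> x fx; have := hG x fx => /(congr1 (fun h => h tt)).
exists F, Gm, (fun x => fadd x (fscale (-1) (Gm (F x)))).
have l00 : (0 <= n)%N by [].
split=> //; split=> //; split.
  by apply: is_morph_sub; [apply: is_morph_id | apply: is_morph_comp mF mG].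
split; [|split; [|split]] => //.
- move=> y fy /=; rewrite hF'; last exact: (mfs (r_morph hO l00)).
  exact: (bd_ker hO l00 fy).
- move=> y fy /=; rewrite hG'; last exact: (mfs (r_morph hL l00)).
  exact: (bd_ker hL l00 fy).
- move=> x fx /=; have fF := mfs mF fx; have fGF := mfs mG fF.
  rewrite (aug_add (r_aug hO)) //; last exact: finsupp_scale.
  rewrite (aug_scale _ (r_aug hO)) //.
  by rewrite hG' // hF' // mulN1r subrr.
Qed.

Lemma Tstep k : (k < n)%N -> Tk k -> Tk k.+1.
Proof.
move=> hk [F [Gm [E [mF [mG [mE [hFa [hGa [hEk hEd]]]]]]]]].
have hk1 : (k <= n)%N by apply: ltnW.
have hk2 : (k.+1 <= n.+1)%N by apply: leqW.
have hk3 : (k <= n.+1)%N by apply: leqW.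
have mdO := r_morph hO hk1; have mdL := r_morph hL hk1.
have [F' [mF' hF']] := plift (r_proper hO hk2) (r_action hL hk2) (r_stab hL hk2)
  (is_morph_comp mdO mF) mdL (fun x fx => proj1 (ker_im hL hk1 (mfs mF (mfs mdO fx))) (hFa x fx)).
have [G' [mG' hG']] := plift (r_proper hL hk2) (r_action hO hk2) (r_stab hO hk2)
  (is_morph_comp mdL mG) mdO (fun x fx => proj1 (ker_im hO hk1 (mfs mG (mfs mdL fx))) (hGa x fx)).
have [h [mh hh]] := plift (r_proper hO hk3) (r_action hO hk2) (r_stab hO hk2)
  mE mdO (fun x fx => proj1 (ker_im hO hk1 (mfs mE fx)) (hEk x fx)).
pose E' := fun x => fadd (fadd x (fscale (-1) (G' (F' x)))) (fscale (-1) (h (dO k x))).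
exists F', G', E'.
split=> //; split=> //; split.
  apply: is_morph_sub; last exact: is_morph_comp mdO mh.
  by apply: is_morph_sub; [apply: is_morph_id | apply: is_morph_comp mF' mG'].
have mdO1 := r_morph hO hk; have mdL1 := r_morph hL hk.
split; [|split; [|split]].
- move=> y fy /= w; rewrite hF'; last exact: (mfs mdO1 fy).
  by rewrite (dd0 hO hk fy) (m0 mF).
- move=> y fy /= w; rewrite hG'; last exact: (mfs mdL1 fy).
  by rewrite (dd0 hL hk fy) (m0 mG).
- move=> x fx /= w.
  have fF := mfs mF' fx; have fGF := mfs mG' fF; have fdx := mfs mdO fx; have fh := mfs mh fdx.
  rewrite /E' (msub mdO); last exact: fh.
    rewrite (msub mdO) // hG' // hF' // hh // (hEd _ fdx (bd_ker hO hk1 fx)).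
    by rewrite /fadd /fscale; ring.
  by apply: finsupp_add => //; apply: finsupp_scale.
- move=> x fx /= hx.
  have e0 : dO k x = @zf _ by apply: functional_extensionality => w; rewrite hx.
  rewrite /E' e0 (m0 mh); apply: functional_extensionality => u.
  by rewrite /fadd /fscale /zf; ring.
Qed.

Lemma Tall k : (k <= n)%N -> Tk k.
Proof.
elim: k => [|k IH] hk; first exact: T0.
by apply: Tstep => //; apply: IH; apply: ltnW.
Qed.

Lemma topdir : weak_iso n dL epsL -> weak_iso n dO epsO.
Proof.
move=> [C [C0 HC]].
have [F [Gm [E [mF [mG [mE [hFa [hGa [hEk hEd]]]]]]]]] := Tall (leqnn n).
have hn1 : (n <= n.+1)%N by apply: leqnSn.
have hn2 : (n.+1 <= n.+1)%N by apply: leqnn.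
have mdO := r_morph hO (leqnn n); have mdL := r_morph hL (leqnn n).
have [G' [mG' hG']] := plift (r_proper hL hn2) (r_action hO hn2) (r_stab hO hn2)
  (is_morph_comp mdL mG) mdO (fun x fx => proj1 (ker_im hO (leqnn n) (mfs mG (mfs mdL fx))) (hGa x fx)).
have [h [mh hh]] := plift (r_proper hO hn1) (r_action hO hn2) (r_stab hO hn2)
  mE mdO (fun x fx => proj1 (ker_im hO (leqnn n) (mfs mE fx)) (hEk x fx)).
have [MF [MF0 bF]] := morph_bound (r_proper hO hn1) (r_action hL hn1) mF.
have [MG [MG0 bG]] := morph_bound (r_proper hL hn2) (r_action hO hn2) mG'.
have [Mh [Mh0 bh]] := morph_bound (r_proper hO hn1) (r_action hO hn2) mh.
have C0' : 0 <= C by apply: ltW.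
have p1 : 0 <= MG * C * MF by apply: mulr_ge0 => //; apply: mulr_ge0.
exists (MG * C * MF + Mh + 1); split; first by lra.
move=> x fx kx rx [t [nt [ct ->]]] e e0.
have [z [fz ez]] := proj1 (ker_im hO (leqnn n) fx) kx.
have kF : ker_at dL epsL (F x) by rewrite -ez; apply: hFa.
have fFx := mfs mF fx.
have [tF [ntF ctF]] := finsupp_nodup fFx.
pose e' := e / (MG + 1).
have MG1 : MG + 1 != 0 by rewrite lt0r_neq0 //; lra.
have e'0 : 0 < e' by apply: divr_gt0 => //; lra.
have E1 : (MG + 1) * e' = e by rewrite /e' mulrC divfK.
have [y' [fy' [dy' [ry [[ty [nty [cty ery]]] hry]]]]] :=
  HC (F x) fFx kF _ (ex_intro _ tF (conj ntF (conj ctF erefl))) e' e'0.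
subst ry.
have dy'e : dL n y' = F x by apply: functional_extensionality.
pose out := fadd (G' y') (h x).
have fG'y := mfs mG' fy'; have fhx := mfs mh fx.
have fout : finsupp out by apply: finsupp_add.
exists out; split=> //; split.
- move=> u; rewrite /out (madd mdO) // hG' // hh // dy'e (hEd _ fx kx) /fadd /fscale.
  by ring.
- have [to [nto cto]] := finsupp_nodup fout.
  exists (\sum_(w <- to) `|out w|); split; first by exists to.
  have b1 : \sum_(w <- to) `|out w| <= \sum_(w <- to) `|G' y' w| + \sum_(w <- to) `|h x w|.
    rewrite -big_split; apply: ler_sum => w _; exact: ler_normD.
  have b2 := bG y' fy' ty nty cty to nto.
  have b3 := bh x fx t nt ct to nto.
  have b4 := bF x fx t nt ct tF ntF.
  have rx0 : 0 <= \sum_(w <- t) `|x w| by apply: sum_ge0.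
  have s1 := ler_wpM2l MG0 hry.
  have s2 := ler_wpM2l C0' b4.
  have s3 := ler_wpM2l MG0 s2.
  have s4 : 0 <= Mh * \sum_(w <- t) `|x w| by apply: mulr_ge0.
  move: b1 b2 b3 s1 s3 E1 e'0 rx0 s4.
  set X := \sum_(w <- t) `|x w|; set Y := \sum_(w <- ty) `|y' w|.
  set Z := \sum_(w <- tF) `|F x w|; set O := \sum_(w <- to) `|out w|.
  set P := \sum_(w <- to) `|G' y' w|; set Q := \sum_(w <- to) `|h x w|.
  move=> *; nra.
Qed.
End Main.

Theorem proposition4p6 (G : tdlc_group) (n : nat) (hFP : type_FP G n.+1)
  (Om : nat -> Type) (actO : forall i, G -> Om i -> Om i)
  (dO : forall i, (Om i.+1 -> rat) -> (Om i -> rat)) (epsO : (Om 0%N -> rat) -> rat)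
  (hO : ppres n actO dO epsO)
  (La : nat -> Type) (actL : forall i, G -> La i -> La i)
  (dL : forall i, (La i.+1 -> rat) -> (La i -> rat)) (epsL : (La 0%N -> rat) -> rat)
  (hL : ppres n actL dL epsL) :
  weak_iso n dL epsL <-> weak_iso n dO epsO.
Proof.
split.
- exact: (topdir hO hL).
- exact: (topdir hL hO).
Qed.
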